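(* Let $p$ be a prime. There is no finite $p$-group $G$ of order at most $p^6$ such that $Z(G)$ is not contained in $G'$, $G$ has nilpotency class at least $3$, and $Z(\mathrm{Inn}(G))=\mathrm{Aut}_c^{Z}(G)<\mathrm{Aut}_c(G)$ (i.e., $\mathrm{Aut}_c^{Z}(G)$ equals $Z(\mathrm{Inn}(G))$ and is a proper subgroup of $\mathrm{Aut}_c(G)$).
   Context: $G'$ is the commutator subgroup and $Z(G)$ the center of $G$. $\mathrm{Inn}(G)$ is the group of inner automorphisms of $G$. An automorphism $\alpha$ of $G$ is central if $x^{-1}\alpha(x)\in Z(G)$ for all $x\in G$; $\mathrm{Aut}_c(G)$ denotes the group of all central automorphisms of $G$, and $\mathrm{Aut}_c^{Z}(G)$ the subgroup of central automorphisms fixing every element of $Z(G)$. *)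

(* Defs.v *)
From mathcomp Require Import all_boot all_fingroup all_solvable.
Set Implicit Arguments. Unset Strict Implicit. Unset Printing Implicit Defensive.
Local Open Scope group_scope.

Definition Inn (gT : finGroupType) (G : {group gT}) : {set {perm gT}} :=
  conj_aut G @* G.

Definition Autc (gT : finGroupType) (G : {group gT}) : {set {perm gT}} :=
  [set a in Aut G | [forall x in G, x^-1 * a x \in 'Z(G)]].

Definition AutcZ (gT : finGroupType) (G : {group gT}) : {set {perm gT}} :=
  [set a in Autc G | [forall z in 'Z(G), a z == z]].

(* Main.v *)
Require Import Defs.
From mathcomp Require Import all_boot all_fingroup all_solvable.
Local Open Scope group_scope.

Section Helpers.
Set Implicit Arguments. Unset Strict Implicit. Unset Printing Implicit Defensive.
Lemma proper_pfactor (gT : finGroupType) (p : nat) (H K : {group gT}) :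
  prime p -> p.-group K -> H \subset K -> H :!=: K -> p * #|H| <= #|K|.
Proof.
move=> pr pK sHK neHK.
have pi : p.-nat #|K : H| by apply: pnat_dvd (dvdn_indexg K H) pK.
have [k ek] := p_natP pi.
rewrite -(Lagrange sHK) ek mulnC leq_pmul2l ?cardG_gt0 //.
case: k ek => [|k] ek.
  have : #|H| = #|K| by rewrite -(Lagrange sHK) ek muln1.
  move=> eq; case/eqP: neHK; apply/eqP; rewrite eqEcard sHK eq leqnn //.
by rewrite expnS -[X in X <= _]muln1 leq_mul // ?expn_gt0 ?prime_gt0.
Qed.

Lemma Klem (qT : finGroupType) (Q Y : {group qT}) p :
  prime p -> p.-group Q -> Y \subset 'Z(Q) -> #|Q| <= p ^ 2 * #|Y| ->
  {in Q, forall a, a ^+ p \in Y} ->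
  (forall a, a \in Q -> exists2 b, b \in Q & b \notin <[a]> <*> Y) ->
  #|Q^`(1)| <= p.
Proof.
move=> pr pQ sYZ cardQ powY hnc.
have sZQ : 'Z(Q) \subset Q := center_sub Q.
have sYQ : Y \subset Q := subset_trans sYZ sZQ.
have [a Qa naY] := hnc 1 (group1 _).
rewrite cycle1 joing1G in naY.
have [b Qb nbA] := hnc a Qa.
pose A1 := (<[a]> <*> Y)%G.
pose A2 := (A1 <*> <[b]>)%G.
have sA1Q : A1 \subset Q by rewrite join_subG cycle_subG Qa sYQ.
have sA2Q : A2 \subset Q by rewrite join_subG sA1Q cycle_subG Qb.
have c1 : p * #|Y| <= #|A1|.
  apply: proper_pfactor pr (pgroupS sA1Q pQ) (joing_subr _ _) _.
  apply: contraNneq naY => ->; apply: (subsetP (joing_subl _ _)); exact: cycle_id.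
have c2 : p * #|A1| <= #|A2|.
  apply: proper_pfactor pr (pgroupS sA2Q pQ) (joing_subl _ _) _.
  apply: contraNneq nbA => /= ->; apply: (subsetP (joing_subr _ _)); exact: cycle_id.
have eQ : A2 :=: Q.
  apply/eqP; rewrite eqEcard sA2Q /=; apply: (@leq_trans (p ^ 2 * #|Y|)) => //.
  apply: (@leq_trans (p * #|A1|)) => //; rewrite expnS -mulnA leq_pmul2l ?prime_gt0 //.
have cardQe : #|Q| = (p ^ 2 * #|Y|)%N.
  apply/eqP; rewrite eqn_leq cardQ /= -eQ; apply: (@leq_trans (p * #|A1|)) => //.
  by rewrite expnS -mulnA leq_pmul2l ?prime_gt0 // ?expn1.
pose R := (<[a]> <*> <[b]>)%G.
have sRQ : R \subset Q by rewrite join_subG !cycle_subG Qa Qb.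
have cYR : Y \subset 'C(R).
  by apply: subset_trans sYZ (subset_trans (subsetIr _ _) (centS sRQ)).
have eQ2 : R <*> Y = Q.
  by rewrite -eQ /= -!joingA (joingC <[b]>).
have dQ : R \* Y = Q by rewrite cprodE // -cent_joinEr.
have := der_cprod 1 dQ.
have cYY : abelian Y := abelianS sYZ (center_abelian Q).
rewrite (derG1P cYY) cprodg1 => eR.
have nYQ : Q \subset 'N(Y) := normal_norm (sub_center_normal sYZ).
have cQY : abelian (Q / Y).
  apply: (@card_p2group_abelian _ p) => //.
  rewrite card_quotient // -divgS // cardQe mulnK //.
have sQ'Y : Q^`(1) \subset Y := der1_min nYQ cQY.
have xyC : [~ a, b] \in 'C(R).
  have : [~ a, b] \in 'Z(Q) by apply: (subsetP sYZ); apply: (subsetP sQ'Y); apply: mem_commg.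
  by move/(subsetP (subset_trans (subsetIr _ _) (centS sRQ))).
have := der1_joing_cycles xyC; rewrite /= eR => ->.
rewrite -orderE.
have xyZ : [~ a, b] \in 'Z(Q).
  by apply: (subsetP sYZ); apply: (subsetP sQ'Y); apply: mem_commg.
have ca : commute a [~ a, b] := centerC Qa xyZ.
have : [~ a, b] ^+ p = 1.
  rewrite -commXg //; apply/eqP/commgP.
  exact: esym (centerC Qb (subsetP sYZ _ (powY a Qa))).
by move/eqP; rewrite -order_dvdn => /dvdn_leq; apply; rewrite prime_gt0.
Qed.
Lemma core (gT : finGroupType) (G : {group gT}) (phi : gT -> gT) :
  AutcZ G \subset Inn G ->
  {in G &, {morph phi : x y / x * y}} ->
  {in G, forall y, phi y \in 'Z(G)} ->
  {in 'Z(G), forall z, phi z = 1} ->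
  exists2 x, x \in G & {in G, forall y, [~ y, x] = phi y}.
Proof.
move=> sAI phiM phiZ phi1.
have sZG : 'Z(G) \subset G := center_sub G.
have phiG y : y \in G -> phi y \in G by move=> Gy; apply: (subsetP sZG); apply: phiZ.
pose f y := y * phi y.
have injf : {in G &, injective f}.
  move=> y1 y2 G1 G2 eq.
  have e1 : phi (f y1) = phi y1 by rewrite /f phiM ?phiG // (phi1 _ (phiZ _ G1)) mulg1.
  have e2 : phi (f y2) = phi y2 by rewrite /f phiM ?phiG // (phi1 _ (phiZ _ G2)) mulg1.
  have : phi y1 = phi y2 by rewrite -e1 -e2 eq.
  by move=> ep; move: eq; rewrite /f ep => /mulIg.
have sfG : f @: G \subset G.
  by apply/subsetP=> _ /imsetP[y Gy ->]; rewrite /f groupM ?phiG.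
pose a := perm_in injf sfG.
have aE : {in G, forall y, a y = y * phi y} by move=> y Gy; rewrite /a perm_inE.
have aAut : a \in Aut G.
  rewrite inE perm_in_on /=; apply/morphicP=> x y Gx Gy.
  rewrite !aE ?groupM // phiM //.
  have cy : commute (phi x) y.
    exact: esym (centerC Gy (phiZ _ Gx)).
  by rewrite -!mulgA; congr (_ * _); rewrite !mulgA cy.
have aZ : a \in AutcZ G.
  rewrite !inE; apply/andP; split; first (apply/andP; split).
  - by move: aAut; rewrite inE.
  - idtac.
    by apply/forallP=> x; apply/implyP=> Gx; rewrite aE // mulKg phiZ.
  apply/forallP=> z; apply/implyP=> Zz.
  by rewrite aE ?(subsetP sZG) // phi1 // mulg1.
have /morphimP[x _ Gx ax] := subsetP sAI a aZ.
exists x => // y Gy.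
rewrite commgEl -(conj_autE Gx Gy) -ax aE //.
by rewrite mulKg.
Qed.
Lemma inZ2 (gT : finGroupType) (G : {group gT}) x :
  x \in G -> {in G, forall y, [~ y, x] \in 'Z(G)} -> x \in 'Z_2(G).
Proof.
move=> Gx h; rewrite ucnSnR inE Gx ucn1 /= gen_subG.
apply/subsetP=> _ /imset2P[u y /set1P -> Gy ->].
by rewrite -invg_comm groupV h.
Qed.

Lemma morph1' (hT gT : finGroupType) (H : {group hT}) (psi : hT -> gT) :
  {in H &, {morph psi : x y / x * y}} -> psi 1 = 1.
Proof.
move=> M; apply: (@mulIg _ (psi 1)); rewrite mul1g -M ?group1 // mulg1 //.
Qed.
Lemma WP (gT : finGroupType) (G M : {group gT}) (w : gT) p :
  prime p -> p.-group G -> maximal M G -> #[w] = p ->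
  exists phi : gT -> gT, [/\ {in G &, {morph phi : x y / x * y}},
     {in G, forall y, phi y \in <[w]>} & {in G, forall y, (phi y == 1) = (y \in M)}].
Proof.
move=> pr pG maxM ow.
have nMG := p_maximal_normal pG maxM.
have iMG := p_maximal_index pG maxM.
have nG : G \subset 'N(M) := normal_norm nMG.
have /properP[sMG [g Gg nMg]] := maxgroupp maxM.
pose h := coset M g.
have cQ : #|G / M| = p by rewrite card_quotient.
have hQ : h \in G / M by apply: mem_quotient.
have h1 : h != 1.
  by apply: contra nMg => /eqP e; apply: coset_idr (subsetP nG g Gg) e.
have oh : #[h] = p.
  have := order_dvdG hQ; rewrite cQ.
  case/primeP: pr => _ /[apply] /orP[|/eqP //].
  by rewrite order_eq1 (negbTE h1).
have eQ : G / M = <[h]>.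
  apply/eqP; rewrite eq_sym eqEcard cycle_subG hQ -orderE oh cQ leqnn //.
have d : #[w] %| #[h] by rewrite ow oh.
exists (fun y => eltm d (coset M y)); split.
- move=> x y Gx Gy /=.
  rewrite morphM ?(subsetP nG) //= eltmM // -eQ mem_quotient //.
- move=> y Gy /=.
  have : coset M y \in <[h]> by rewrite -eQ mem_quotient.
  by case/cycleP=> i ->; rewrite eltmE mem_cycle.
- move=> y Gy /=.
  have yQ : coset M y \in <[h]> by rewrite -eQ mem_quotient.
  have inj : 'injm (eltm d) by rewrite injm_eltm ow oh.
  rewrite (morph_injm_eq1 inj yQ).
  apply/eqP/idP => [e|My]; first exact: coset_idr (subsetP nG y Gy) e.
  exact: coset_id.
Qed.
Lemma Wz (hT gT : finGroupType) (H : {group hT}) (h : hT) (z : gT) :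
  abelian H -> h \in H -> #[h] = exponent H -> #[z] %| #[h] ->
  exists psi : hT -> gT, [/\ {in H &, {morph psi : x y / x * y}}, psi h = z
     & {in H, forall a, psi a \in <[z]>}].
Proof.
move=> cHH Hh oh d.
have /splitsP[K /complP[tiK defH]] := abelian_splits Hh oh cHH.
have sKH : K \subset H by rewrite -defH mulG_subr.
have cK : K \subset 'C(<[h]>).
  by apply: subset_trans (centS _); [apply: subset_trans cHH | rewrite cycle_subG].
have dH : <[h]> \x K = H by rewrite dprodE.
have cf : (trivm K : hT -> gT) @* K \subset 'C(eltm d @* <[h]>).
  by rewrite morphim_trivm sub1G.
exists (dprodm dH cf); split.
- by move=> x y Hx Hy; rewrite morphM //.
- by rewrite dprodmEl ?cycle_id //; apply: eltm_id.
- move=> a Ha.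
  have : dprodm dH cf a \in dprodm dH cf @* H by apply: mem_morphim.
  by rewrite im_dprodm morphim_trivm mulg1 im_eltm.
Qed.
Lemma ncyc_Z2 (gT : finGroupType) (G : {group gT}) :
  3 <= nil_class G -> ~~ cyclic (G / 'Z_2(G)).
Proof.
move=> cl; apply/negP => cyc.
have sZZ2 : 'Z(G) \subset 'Z_2(G) by rewrite -ucn1 ucn_sub_geq.
have iso := third_isog sZZ2 (center_normal G) (ucn_normal 2 G).
have hZ : 'Z_2(G) / 'Z(G) = 'Z(G / 'Z(G)) by rewrite -ucn1 ucn_central.
have : cyclic (G / 'Z(G) / ('Z_2(G) / 'Z(G))) by rewrite (isog_cyclic iso).
rewrite hZ.
move/cyclic_center_factor_abelian => cGZ.
have : G^`(1) \subset 'Z(G) := der1_min (normal_norm (center_normal G)) cGZ.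
by rewrite -nil_class2 => le2; move: cl; rewrite leqNgt ltnS le2.
Qed.

Lemma nc_Z2 (gT : finGroupType) (G : {group gT}) a :
  3 <= nil_class G -> a \in G -> exists2 b, b \in G & b \notin <[a]> <*> 'Z_2(G).
Proof.
move=> cl Ga.
have sub : <[a]> <*> 'Z_2(G) \subset G by rewrite join_subG cycle_subG Ga ucn_sub.
have [eq|] := eqVneq (<[a]> <*> 'Z_2(G)) G.
  have e : G / 'Z_2(G) = (<[a]> <*> 'Z_2(G)) / 'Z_2(G) by rewrite eq.
  case/negP: (ncyc_Z2 cl); rewrite e quotientYidr ?cycle_subG ?(subsetP (ucn_norm 2 G)) //.
  by rewrite quotient_cycle ?(subsetP (ucn_norm 2 G)) // cycle_cyclic.
move=> ne; have /properP[_ [b Gb nb]] : <[a]> <*> 'Z_2(G) \proper G by rewrite properEneq ne sub.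
by exists b.
Qed.

Lemma pow_Z2 (gT : finGroupType) (G : {group gT}) p a :
  prime p -> p.-group G -> 3 <= nil_class G ->
  #|G| <= p ^ 2 * #|'Z_2(G)| -> a \in G -> a ^+ p \in 'Z_2(G).
Proof.
move=> pr pG cl cG Ga.
have nZ : G \subset 'N('Z_2(G)) := ucn_norm 2 G.
have Na : a \in 'N('Z_2(G)) := subsetP nZ a Ga.
have aQ : coset 'Z_2(G) a \in G / 'Z_2(G) by apply: mem_quotient.
have pQ : p.-nat #|G / 'Z_2(G)| := quotient_pgroup _ pG.
have [k ek] := p_natP pQ.
have kle : k <= 2.
  have : p ^ k <= p ^ 2.
    rewrite -ek card_quotient // -(leq_pmul2l (cardG_gt0 'Z_2(G))) Lagrange ?ucn_sub //.
    by rewrite mulnC.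
  by rewrite leq_exp2l // prime_gt1.
have : #[coset 'Z_2(G) a] %| p ^ k by rewrite -ek order_dvdG.
case/(@dvdn_pfactor p _ k pr) => m lemk em.
have m1 : m <= 1.
  rewrite leqNgt; apply/negP => m2.
  have mk : m = k by apply/eqP; rewrite eqn_leq lemk /=; exact: leq_trans kle m2.
  case/negP: (ncyc_Z2 cl); apply/cyclicP; exists (coset 'Z_2(G) a).
  apply/eqP; rewrite eq_sym eqEcard cycle_subG aQ -orderE em mk -ek leqnn //.
have : #[coset 'Z_2(G) a] %| p by rewrite em (dvdn_exp2l p m1).
rewrite order_dvdn -morphX // => /eqP e.
by apply: coset_idr e; rewrite groupX.
Qed.

Lemma S_group (gT : finGroupType) (G W : {group gT}) :
  W \subset 'Z(G) -> group_set [set u in G | [forall y in G, [~ y, u] \in W]].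
Proof.
move=> sWZ; apply/group_setP; split.
  by rewrite inE group1; apply/forall_inP => y _; rewrite commg1 group1.
move=> u v; rewrite !inE => /andP[Gu /forall_inP hu] /andP[Gv /forall_inP hv].
rewrite groupM //; apply/forall_inP => y Gy.
rewrite commgMJ groupM ?hv //.
have : [~ y, u] \in 'Z(G) by apply: (subsetP sWZ); apply: hu.
move=> Zc; have -> : [~ y, u] ^ v = [~ y, u].
  by apply/conjg_fixP/commgP; exact: esym (centerC Gv Zc).
exact: hu.
Qed.

Section Arith.
Local Open Scope nat_scope.
Lemma arith (p z a1 a2 z2 g : nat) : 0 < p -> p * p <= z -> p * z <= a1 -> p * a1 <= a2 -> a2 <= z2 -> p * (p * z2) <= g -> g <= p ^ 6 ->
  [/\ z = (p * p)%N, a2 = z2 & p * (p * (p * p)) <= z2].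
Proof.
move=> p0 hz h1 h2 h3 h4 h5.
have pp : 0 < p * p by rewrite muln_gt0 p0.
have e6 : p ^ 6 = p * p * (p * p * (p * p)) by rewrite !expnS expn0 muln1 !mulnA.
have ha2 : p * p * z <= a2 by rewrite -mulnA (leq_trans _ h2) // leq_pmul2l.
have hz2 : p * p * z2 <= p * p * (p * p * (p * p)) by rewrite -e6 mulnA in h4 *; exact: leq_trans h4 h5.
rewrite leq_pmul2l // in hz2.
have hz' : z <= p * p.
  by rewrite -(leq_pmul2l pp); apply: leq_trans ha2 (leq_trans h3 hz2).
have ez : z = p * p by apply/eqP; rewrite eqn_leq hz' hz.
have ha2' : p * p * (p * p) <= a2 by rewrite -{2}ez.
split; first exact: ez.
  by apply/eqP; rewrite eqn_leq h3 (leq_trans hz2 ha2').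
by rewrite !mulnA; rewrite mulnA in ha2'; exact: leq_trans ha2' h3.
Qed.
End Arith.
End Helpers.

Theorem theorem2p3 (p : nat) (gT : finGroupType) (G : {group gT}) :
  prime p -> p.-group G -> #|G| <= p ^ 6 ->
  ~~ ('Z(G) \subset G^`(1)) -> 3 <= nil_class G ->
  ~ ('Z(Inn G) = AutcZ G /\ AutcZ G \proper Autc G).
Proof.
move=> pr pG cardG nZD cl [eqZA _].
have sAI : AutcZ G \subset Inn G by rewrite -eqZA center_sub.
have Wit := core sAI.
have nilG : nilpotent G := pgroup_nil pG.
have sZG : 'Z(G) \subset G := center_sub G.
have sZZ2 : 'Z(G) \subset 'Z_2(G) by rewrite -ucn1 ucn_sub_geq.
have sZ2G : 'Z_2(G) \subset G := ucn_sub 2 G.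
have p0 : 0 < p := prime_gt0 pr.
have ncG : ~~ abelian G.
  by rewrite -nil_class1 -ltnNge; apply: leq_trans cl.
pose D := (G^`(1) :&: 'Z(G))%G.
have D1 : D :!=: 1.
  apply: meet_center_nil nilG (der_normal 1 G) _.
  by apply: contra ncG => /eqP/derG1P.
have DZ : D :!=: 'Z(G).
  by apply: contra nZD => /eqP <-; apply: subsetIl.
have pZ : p.-group 'Z(G) := pgroupS sZG pG.
have cD : p <= #|D|.
  have D1' : 1 :!=: D by rewrite eq_sym.
  have := proper_pfactor pr (pgroupS (subsetIr _ _) pZ) (sub1G D) D1'.
  by rewrite cards1 muln1.
have cZD : p * #|D| <= #|'Z(G)| := proper_pfactor pr pZ (subsetIr _ _) DZ.
have cZ : p * p <= #|'Z(G)|.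
  by apply: leq_trans cZD; rewrite leq_pmul2l.
have pD : p.-group D := pgroupS (subsetIr _ _) pZ.
have [_ pdD _] := pgroup_pdiv pD D1.
have [w Dw ow] := Cauchy pr pdD.
have Zw : w \in 'Z(G) by move: Dw; rewrite inE => /andP[].
have G'w : w \in G^`(1) by move: Dw; rewrite inE => /andP[].
have sWZ : <[w]> \subset 'Z(G) by rewrite cycle_subG.
have getx : forall M : {group gT}, maximal M G -> 'Z(G) \subset M ->
    exists2 x, x \in 'Z_2(G) &
      {in G, forall y, [~ y, x] \in <[w]> /\ ([~ y, x] == 1) = (y \in M)}.
  move=> M maxM sZM; have [phi [phiM phiW phiK]] := WP pr pG maxM ow.
  have phi1 : {in 'Z(G), forall z, phi z = 1}.
    by move=> z Zz; apply/eqP; rewrite phiK ?(subsetP sZG) // (subsetP sZM).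
  have [x Gx hx] := Wit phi phiM (fun y Gy => subsetP sWZ _ (phiW y Gy)) phi1.
  exists x.
    apply: (inZ2 Gx) => y Gy; rewrite hx //; apply: (subsetP sWZ); exact: phiW.
  by move=> y Gy; rewrite hx //; split; [exact: phiW | exact: phiK].
have [b0 Gb0 nb0] := nc_Z2 cl (group1 G).
rewrite cycle1 joing1G in nb0.
have [eqZ2|[M1 maxM1 sZ2M1]] := maximal_exists sZ2G.
  by move: nb0; rewrite eqZ2 Gb0.
have /properP[sM1G [g Gg ngM1]] := maxgroupp maxM1.
have [c Gc nc] := nc_Z2 cl Gg.
have sLG : (<[g]> <*> 'Z_2(G))%G \subset G by rewrite join_subG cycle_subG Gg sZ2G.
have [eqL|[M2 maxM2 sLM2]] := maximal_exists sLG.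
  by move: nc; rewrite eqL Gc.
have gM2 : g \in M2 by apply: (subsetP sLM2); rewrite mem_gen // inE cycle_id.
have sZ2M2 : 'Z_2(G) \subset M2 by apply: subset_trans sLM2; apply: joing_subr.
have [x1 Z2x1 hx1] := getx M1 maxM1 (subset_trans sZZ2 sZ2M1).
have [x2 Z2x2 hx2] := getx M2 maxM2 (subset_trans sZZ2 sZ2M2).
have nx1Z : x1 \notin 'Z(G).
  apply/negP => Zx1; have e := (hx1 g Gg).2; rewrite (negbTE ngM1) in e.
  by have c0 := introT commgP (centerC Gg Zx1); rewrite c0 in e.
have sZC : forall M : {group gT}, M \subset G -> 'Z(G) \subset 'C(M).
  by move=> M sMG; apply: subset_trans (subsetIr _ _) (centS sMG).
have x1C : x1 \in 'C(M1).
  apply/centP => y My; apply: esym; apply/commgP.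
  by rewrite (hx1 y (subsetP sM1G y My)).2.
have sA1C : <[x1]> <*> 'Z(G) \subset 'C(M1).
  by rewrite join_subG cycle_subG x1C sZC.
have nx2A1 : x2 \notin <[x1]> <*> 'Z(G).
  apply/negP => A1x2.
  have sM12 : M1 \subset M2.
    apply/subsetP => y My; have Gy := subsetP sM1G y My.
    rewrite -(hx2 y Gy).2; apply/commgP; apply: esym.
    by have /centP := subsetP sA1C _ A1x2; apply.
  have e := (maxgroupP maxM1).2 M2 (maxgroupp maxM2) sM12.
  by move: ngM1; rewrite -e gM2.
pose A1 := (<[x1]> <*> 'Z(G))%G.
pose A2 := (A1 <*> <[x2]>)%G.
have sA1Z2 : A1 \subset 'Z_2(G) by rewrite join_subG cycle_subG Z2x1 sZZ2.
have sA2Z2 : A2 \subset 'Z_2(G) by rewrite join_subG sA1Z2 cycle_subG Z2x2.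
have pZ2 : p.-group 'Z_2(G) := pgroupS sZ2G pG.
have c1 : p * #|'Z(G)| <= #|A1|.
  apply: proper_pfactor pr (pgroupS sA1Z2 pZ2) (joing_subr _ _) _.
  apply: contraNneq nx1Z => ->; apply: (subsetP (joing_subl _ _)); exact: cycle_id.
have c2 : p * #|A1| <= #|A2|.
  apply: proper_pfactor pr (pgroupS sA2Z2 pZ2) (joing_subl _ _) _.
  apply: contraNneq nx2A1 => /= ->; apply: (subsetP (joing_subr _ _)); exact: cycle_id.
have c3 : #|A2| <= #|'Z_2(G)| := subset_leq_card sA2Z2.
have c4 : p * (p * #|'Z_2(G)|) <= #|G|.
  have [b1 Gb1 nb1] := nc_Z2 cl Gb0.
  have sL0 : (<[b0]> <*> 'Z_2(G))%G \subset G by rewrite join_subG cycle_subG Gb0 sZ2G.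
  have d1 : p * #|'Z_2(G)| <= #|<[b0]> <*> 'Z_2(G)|.
    apply: proper_pfactor pr (pgroupS sL0 pG) (joing_subr _ _) _.
    apply: contraNneq nb0 => ->; apply: (subsetP (joing_subl _ _)); exact: cycle_id.
  have d2 : p * #|<[b0]> <*> 'Z_2(G)| <= #|G|.
    apply: proper_pfactor pr pG sL0 _.
    by apply: contraNneq nb1 => /= ->.
  by apply: leq_trans d2; rewrite leq_pmul2l.
have cardG0 := cardG.
have [cZe eA2 cZ2] := arith p0 cZ c1 c2 c3 c4 cardG0.
have eZ2 : A2 :=: 'Z_2(G) by apply/eqP; rewrite eqEcard sA2Z2 eA2 leqnn.
have cZ2C : forall x, x \in 'Z_2(G) -> (forall y, y \in 'Z_2(G) -> ([~ y, x] == 1)) -> x \in 'C('Z_2(G)).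
  by move=> x _ hx; apply/centP => y Zy; apply: esym; apply/commgP; apply: hx.
have sA2C : A2 \subset 'C('Z_2(G)).
  rewrite !join_subG !cycle_subG sZC // andbT; apply/andP; split.
    apply: cZ2C => // y Zy; rewrite (hx1 y (subsetP sZ2G y Zy)).2.
    exact: (subsetP sZ2M1).
  apply: cZ2C => // y Zy; rewrite (hx2 y (subsetP sZ2G y Zy)).2.
  exact: (subsetP sZ2M2).
have cZ2ab : abelian 'Z_2(G) by rewrite /abelian -{1}eZ2.
pose W := (<[w]>)%G.
pose S := Group (S_group sWZ).
have sA2S : A2 \subset S.
  rewrite !join_subG !cycle_subG !inE (subsetP sZ2G _ Z2x1) (subsetP sZ2G _ Z2x2) /=.
  apply/andP; split; first (apply/andP; split).
  - by apply/forall_inP => y Gy; exact: (hx1 y Gy).1.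
  - apply/subsetP => z Zz; rewrite inE (subsetP sZG z Zz) /=.
    apply/forall_inP => y Gy; rewrite (eqP (introT commgP (centerC Gy Zz))).
    exact: group1.
  - by apply/forall_inP => y Gy; exact: (hx2 y Gy).1.
have cZ2W : [~: 'Z_2(G), G] \subset W.
  rewrite gen_subG; apply/subsetP => _ /imset2P[u y Zu Gy ->].
  have : u \in S by apply: (subsetP sA2S); rewrite eZ2.
  rewrite inE => /andP[_ /forall_inP hu].
  by rewrite -invg_comm groupV hu.
have nWG : G \subset 'N(W) := normal_norm (sub_center_normal sWZ).
have sWG : W \subset G := subset_trans sWZ sZG.
have sWZ2 : W \subset 'Z_2(G) := subset_trans sWZ sZZ2.
have sWD : W \subset G^`(1) by rewrite cycle_subG.
have cGZ2 : #|G| <= p ^ 2 * #|'Z_2(G)|.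
  apply: leq_trans cardG _.
  rewrite (_ : 6 = 2 + 4)%N // expnD leq_pmul2l ?expn_gt0 ?p0 //.
have hY : 'Z_2(G) / W \subset 'Z(G / W).
  by rewrite subsetI quotientS //= quotient_cents2r.
have hc : #|G / W| <= p ^ 2 * #|'Z_2(G) / W|.
  rewrite !card_quotient ?(subset_trans sZ2G nWG) //.
  rewrite -(leq_pmul2l (cardG_gt0 W)) Lagrange // mulnCA Lagrange //.
have hpow : {in G / W, forall a, a ^+ p \in 'Z_2(G) / W}.
  move=> _ /morphimP[a Na Ga ->]; rewrite -morphX //.
  by apply: mem_quotient; apply: pow_Z2.
have hnc : forall a, a \in G / W -> exists2 b, b \in G / W & b \notin <[a]> <*> ('Z_2(G) / W).
  move=> _ /morphimP[a Na Ga ->]; have [b Gb nb] := nc_Z2 cl Ga.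
  exists (coset W b); first exact: mem_quotient.
  apply: contra nb => hb.
  rewrite -quotient_cycle // -quotientY ?cycle_subG ?(subset_trans sZ2G nWG) // in hb.
  have hb' : b \in coset W @*^-1 ((<[a]> <*> 'Z_2(G)) / W).
    exact: (mem_morphpre (subsetP nWG b Gb) hb).
  rewrite quotientK ?mulSGid // in hb'.
    by apply: subset_trans sWZ2 (joing_subr _ _).
  by rewrite join_subG cycle_subG Na (subset_trans sZ2G nWG).
have := Klem pr (quotient_pgroup _ pG) hY hc hpow hnc.
rewrite -quotient_der // card_quotient ?(subset_trans (der_sub 1 G) nWG) //.
rewrite -(leq_pmul2l (cardG_gt0 W)) Lagrange // -orderE ow => cD2.
pose N := (G^`(1) <*> 'Z(G))%G.
have cZG' : 'Z(G) \subset 'C(G^`(1)) := sZC _ (der_sub 1 G).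
have eN : N :=: G^`(1) * 'Z(G) by rewrite /= cent_joinEr.
have cN : #|N| * p <= p * p * (p * p).
  have := mul_cardG (G^`(1))%G 'Z(G); rewrite -eN cZe => e.
  apply: leq_trans (_ : #|N| * #|D| <= _).
    by rewrite leq_pmul2l ?cardG_gt0.
  by rewrite -e leq_pmul2r ?muln_gt0 ?p0.
have nZ2N : ~~ ('Z_2(G) \subset N).
  apply/negP => /subset_leq_card le.
  have h1 : p * p * (p * p) * p <= #|N| * p.
    by rewrite leq_pmul2r // (leq_trans _ le) // -!mulnA.
  have := leq_trans h1 cN; rewrite -{2}[(p * p * (p * p))%N]muln1 leq_pmul2l ?muln_gt0 ?p0 //.
  by rewrite leqNgt prime_gt1.
have [u Z2u nNu] := subsetPn nZ2N.
have [z Zz nG'z] := subsetPn nZD.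
have nNG : N <| G := normalY (der_normal 1 G) (center_normal G).
have nNG' : G \subset 'N(N) := normal_norm nNG.
have sZN : 'Z(G) \subset N := joing_subr _ _.
have cGb : abelian (G / N) := sub_der1_abelian (joing_subl _ _).
have pGb : p.-group (G / N) := quotient_pgroup _ pG.
have Gu : u \in G := subsetP sZ2G u Z2u.
case: (boolP (p.-abelem (G / N))) => [abG|nabG].
  have Phi1 : 'Phi(G / N) = 1 by apply/eqP; rewrite (trivg_Phi pGb).
  have ub1 : coset N u != 1.
    by apply: contra nNu => /eqP e; apply: coset_idr e; exact: subsetP nNG' u Gu.
  have [H /andP[mH nuH]] : exists H : {group coset_of N}, maximal_eq H (G / N) && (coset N u \notin H).
    apply/existsP; apply: contraT => /existsPn hall.
    have : coset N u \in 'Phi(G / N).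
      by apply/bigcapP => H mH; move: (hall H); rewrite mH /= negbK.
    by rewrite Phi1 inE (negbTE ub1).
  case/orP: mH => [/eqP eH|mH].
    by move: nuH; rewrite eH mem_quotient.
  pose M := (coset N @*^-1 H)%G.
  have maxM : maximal M G.
    by have := cosetpre_maximal H (G / N)%G; rewrite (quotientGK nNG) mH.
  have sZM : 'Z(G) \subset M := subset_trans sZN (sub_cosetpre H).
  have nuM : u \notin M.
    by apply/negP => /morphpreP[_ h]; rewrite h in nuH.
  have [x3 Z2x3 hx3] := getx M maxM sZM.
  have := (hx3 u Gu).2; rewrite (negbTE nuM).
  by rewrite (introT commgP ((centsP cZ2ab) u Z2u x3 Z2x3)).
have [gb Gbg egb] := exponent_witness (pgroup_nil pGb).
have ngb : ~~ (#[gb] %| p) by rewrite -egb; move: nabG; rewrite abelemE // cGb.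
have pgb : p.-nat #[gb] := mem_p_elt pGb Gbg.
have [k ek] := p_natP pgb.
have dz : #[z] %| #[gb].
  apply: dvdn_trans (order_dvdG Zz) _; rewrite cZe ek.
  have -> : (p * p = p ^ 2)%N by rewrite expnS expn1.
  apply: dvdn_exp2l; case: k ek => [|[|k]] ek //.
    by move: ngb; rewrite ek dvd1n.
  by move: ngb; rewrite ek expn1 dvdnn.
have [psi [psiM psig psiZ]] := Wz cGb Gbg (esym egb) dz.
have phiM : {in G &, {morph (fun y => psi (coset N y)) : x y / x * y}}.
  move=> x y Gx Gy /=; rewrite morphM ?(subsetP nNG') //.
  by rewrite psiM ?mem_quotient.
have phiZ : {in G, forall y, psi (coset N y) \in 'Z(G)}.
  move=> y Gy; apply: (subsetP (_ : <[z]> \subset 'Z(G))).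
    by rewrite cycle_subG.
  by apply: psiZ; rewrite mem_quotient.
have phi1 : {in 'Z(G), forall y, psi (coset N y) = 1}.
  by move=> y Zy; rewrite coset_id ?(subsetP sZN) //; apply: morph1' psiM.
have [x Gx hx] := Wit _ phiM phiZ phi1.
move: Gbg psig => /morphimP[g' Ng' Gg' ->] psig.
have := hx g' Gg'; rewrite psig => e.
by move: nG'z; rewrite -e derg1 mem_commg.
Qed.
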